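(* Let $m,n,k$ be positive integers with $(m,k-1)=1$ and $n=\mathrm{ind}_m(k)$, let $G=G(m,n,k)=\langle a,b;\ a^m=1,\ b^n=1,\ b^{-1}ab=a^k\rangle$, let $S\subseteq\mathbb{Z}_m$ be a base and let $x\in S^*$. Then $\mathrm{orb}(x,S^* )$ is basic if and only if the $x$-family $\mathcal{F}_G(x,S)$ is complete.
   Context: $\mathrm{ind}_m(k)$ is the least positive integer $d$ with $k^d\equiv 1\pmod m$. Elements of $G$ are written uniquely as $a^ib^j$, $i\in\mathbb{Z}_m$, $j\in\mathbb{Z}_n$; $k_t=k^t-1\pmod m$. Maps are written on the right and composed left to right. For $x,y\in\mathbb{Z}_m$, $\mu(x,y):G\to G$ is $(a^ib^j)\mu(x,y)=a^{xik^j-yk_j}$, and $C(x,y)=\{\mu(x,yz):z\in\mathbb{Z}_m\}$. For $S\subseteq\mathbb{Z}_m$, $I(S)$ is the set of elements of $S$ invertible in $\mathbb{Z}_m$ and $S^*$ is the multiplicative subsemigroup of $\mathbb{Z}_m$ generated by $S$. A base is $S\subseteq \mathbb{Z}_m$ with $0\in S$ and $I(S)\ne\varnothing$. $\Sigma_G(S)$ is the semigroup under composition generated by $\{\mu(s,z):s\in S,z\in\mathbb{Z}_m\}$. For $x\in S^*$, $Y(x)=\{s^*z: s^*\in S^*, z\in\mathbb{Z}_m, \exists s\in S,\ x\equiv ss^*\pmod m\}$, $\mathcal{F}_G(x,S)=\{C(x,y):y\in Y(x)\}$, and $\mathcal{F}_G(x,S)$ is complete if $C(x,1)\in\mathcal{F}_G(x,S)$.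 The orbit of $x$ is $\mathrm{orb}(x,S^* )=\{xy: y\in I(S^* )\}$, and it is basic if $\mathrm{orb}(x,S^* )\cap S\neq\varnothing$. *)

(* Defs.v *)
From mathcomp Require Import all_boot all_algebra.
Set Implicit Arguments. Unset Strict Implicit. Unset Printing Implicit Defensive.
Import GRing.Theory Num.Theory.
Local Open Scope ring_scope.

(* Residues of Z_m are handled as integers compared modulo m;
   elements of Z_m that are "given" (elements of S, x, z) are ordinals 'I_m. *)

Definition eqm (m : nat) (a b : int) : Prop := modz a m%:Z = modz b m%:Z.

Definition is_ind (m k d : nat) : Prop :=
  (0 < d)%N /\ (k ^ d = 1 %[mod m])%N /\
  (forall e : nat, (0 < e)%N -> (e < d)%N -> (k ^ e <> 1 %[mod m])%N).

Definition inS (m : nat) (S : {set 'I_m}) (r : int) : Prop :=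
  exists2 s : 'I_m, s \in S & eqm m (s : nat)%:Z r.

Definition invm (m : nat) (r : int) : Prop := exists u : int, eqm m (r * u) 1.

Definition Sstar (m : nat) (S : {set 'I_m}) (r : int) : Prop :=
  exists s : seq 'I_m,
    [/\ s != [::], all (fun t => t \in S) s & eqm m (\prod_(t <- s) (t : nat)%:Z) r].

Definition base (m : nat) (S : {set 'I_m}) : Prop :=
  inS S 0 /\ exists r : int, inS S r /\ invm m r.

Definition in_orb (m : nat) (S : {set 'I_m}) (x r : int) : Prop :=
  exists y : int, [/\ Sstar S y, invm m y & eqm m r (x * y)].

Definition basic (m : nat) (S : {set 'I_m}) (x : int) : Prop :=
  exists r : int, in_orb S x r /\ inS S r.

Definition inY (m : nat) (S : {set 'I_m}) (x r : int) : Prop :=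
  exists sst : int, exists z : 'I_m,
    [/\ Sstar S sst,
        (exists2 s : 'I_m, s \in S & eqm m x ((s : nat)%:Z * sst))
      & eqm m r (sst * (z : nat)%:Z)].

(* The group G(m,n,k): its elements are written uniquely a^i b^j with
   i \in Z_m, j \in Z_n; we index them by the pair (i, j) : 'I_m * 'I_n.
   mu(x,y) : G -> G, a^i b^j |-> a^(x i k^j - y k_j), k_j = k^j - 1 (mod m).
   As its values lie in <a>, we record the exponent of a, reduced mod m. *)
Definition mu (m n k : nat) (x y : int) (g : 'I_m * 'I_n) : int :=
  modz (x * (g.1 : nat)%:Z * (k%:Z) ^+ g.2 - y * ((k%:Z) ^+ g.2 - 1)) m%:Z.

Definition Cset (m n k : nat) (x y : int) (f : 'I_m * 'I_n -> int) : Prop :=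
  exists z : 'I_m, f = @mu m n k x (y * (z : nat)%:Z).

(* F_G(x,S) = { C(x,y) : y \in Y(x) } is complete iff C(x,1) \in F_G(x,S),
   i.e. C(x,y) = C(x,1) (as sets of maps) for some y \in Y(x) *)
Definition complete (m n k : nat) (S : {set 'I_m}) (x : int) : Prop :=
  exists y : int, inY S x y /\ (forall f, @Cset m n k x y f <-> @Cset m n k x 1 f).

(* Main.v *)
Require Import Defs.
From mathcomp Require Import all_boot all_algebra.
From mathcomp Require cyclic.
From mathcomp Require Import ring.
From Stdlib Require Import FunctionalExtensionality.
Set Implicit Arguments. Unset Strict Implicit. Unset Printing Implicit Defensive.
Import GRing.Theory Num.Theory.

Section Helpers.
Local Open Scope ring_scope.
Variable m : nat.

Lemma eqm_sym a b : eqm m a b -> eqm m b a. Proof. by rewrite /eqm. Qed.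
Lemma eqm_trans a b c : eqm m a b -> eqm m b c -> eqm m a c.
Proof. by rewrite /eqm => ->. Qed.
Lemma eqm_mul a a' b b' : eqm m a a' -> eqm m b b' -> eqm m (a * b) (a' * b').
Proof. by rewrite /eqm => h1 h2; rewrite -modzMml h1 modzMml -modzMmr h2 modzMmr. Qed.
Lemma eqm_refl a : eqm m a a. Proof. by []. Qed.

Lemma sstar_mul (S : {set 'I_m}) a b : Sstar S a -> Sstar S b -> Sstar S (a * b).
Proof.
case=> s1 [n1 a1 e1] [s2 [n2 a2 e2]]; exists (s1 ++ s2); split.
- by case: s1 n1 {a1 e1}.
- by rewrite all_cat a1 a2.
- by rewrite big_cat /=; apply: eqm_mul.
Qed.

Lemma sstar_exp (S : {set 'I_m}) a j : Sstar S a -> Sstar S (a ^+ j.+1).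
Proof.
move=> h; elim: j => [|j IH]; first by rewrite expr1.
by rewrite exprS; apply: sstar_mul.
Qed.

Lemma inv_coprime y : (0 < m)%N -> invm m y -> coprime (absz (modz y m%:Z)) m.
Proof.
move=> m0 [u hu].
have : (m%:Z %| (y %% m)%Z * u - 1)%Z.
  by rewrite -eqz_mod_dvd; apply/eqP; rewrite modzMml.
case/dvdzP=> q hq.
have: coprimez (y %% m)%Z m.
  apply/coprimezP; exists (u, -q) => /=.
  by rewrite mulrC mulNr -hq; ring.
by rewrite coprimezE.
Qed.

Lemma euler_int y : (0 < m)%N -> invm m y -> eqm m (y ^+ totient m) 1.
Proof.
move=> m0 hy; have cp := inv_coprime m0 hy.
have E := cyclic.Euler_exp_totient cp.
have ge : (0 <= (y %% m)%Z) by apply: modz_ge0; rewrite eqz_nat -lt0n.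
have PX : forall (a e : nat), ((a ^ e)%N)%:Z = (a%:Z) ^+ e.
  by move=> a e; rewrite -!natz natrX.
rewrite /eqm -modzXm -[(y %% m)%Z]gez0_abs // -PX modz_nat E -modz_nat.
by [].
Qed.

Lemma sstar_inv (S : {set 'I_m}) y : (0 < m)%N -> Sstar S y -> invm m y ->
  exists w, [/\ Sstar S w, invm m w & eqm m (y * w) 1].
Proof.
move=> m0 hs hy; set e := totient m.
have e0 : (0 < e)%N by rewrite totient_gt0.
have E := euler_int m0 hy.
exists (y ^+ (e.-1 + e.-1).+1).
have H : eqm m (y * y ^+ (e.-1 + e.-1).+1) 1.
  rewrite -exprS -addSn -addnS prednK // exprD.
  by rewrite -[1](mulr1 1); apply: eqm_mul.
split => //; first exact: sstar_exp.
by exists y; rewrite mulrC.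
Qed.

End Helpers.

Section Main.
Local Open Scope ring_scope.

Lemma complete_inv (m n k : nat) (S : {set 'I_m}) (x0 : int) :
  (0 < m)%N -> (0 < n)%N -> (0 < k)%N ->
  coprime m (k - 1) -> is_ind m k n ->
  complete n k S x0 -> exists y, inY S x0 y /\ invm m y.
Proof.
move=> m0 n0 k0 cop [_ [hk _]] [y [hY hiff]].
exists y; split => //.
have [m1|n1] : m = 1%N \/ (1 < n)%N.
  case: (ltnP 1 n) => hn; [by right|left].
  have n1 : n = 1%N by apply/eqP; rewrite eqn_leq hn n0.
  move: hk; rewrite n1 expn1 => /eqP; rewrite eqn_mod_dvd // => dv.
  have := coprime_dvdr dv cop.
  by rewrite /coprime gcdnn => /eqP.
  by subst m; exists 0; rewrite /eqm !modz1.
pose z1 : 'I_m := Ordinal (ltn_pmod 1 m0).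
have [z hz] : Cset k x0 y (@mu m n k x0 (1 * (z1 : nat)%:Z)).
  by apply/hiff; exists z1.
pose g : 'I_m * 'I_n := (Ordinal m0, Ordinal n1).
have := congr1 (fun f => f g) hz; rewrite /mu /= !expr1 !mulr0 !mul0r !add0r.
move/eqP; rewrite eqz_mod_dvd.
have -> : - (1 * (z1 : nat)%:Z * (k%:Z - 1)) - - (y * (z : nat)%:Z * (k%:Z - 1))
   = (y * (z : nat)%:Z - (z1 : nat)%:Z) * (k%:Z - 1) by ring.
rewrite Gauss_dvdzl; last by rewrite subzn // coprimezE.
rewrite -eqz_mod_dvd => /eqP e.
exists (z : nat)%:Z; rewrite /eqm e /= modz_nat modz_nat modn_mod.
by [].
Qed.


Lemma mu_eq (m n k : nat) x a b : eqm m a b -> @mu m n k x a = @mu m n k x b.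
Proof.
move=> e; apply: functional_extensionality => g; rewrite /mu; apply/eqP.
rewrite eqz_mod_dvd.
set P := _ * _ * _; set Q := (_ - 1).
have -> : P - a * Q - (P - b * Q) = (b - a) * Q by ring.
apply: dvdz_mulr; rewrite -eqz_mod_dvd; apply/eqP; exact: esym.
Qed.

Lemma ex_ord (m : nat) (t : int) : (0 < m)%N -> exists z : 'I_m, eqm m t (z : nat)%:Z.
Proof.
case: m => // m' _; exists (inZp (absz (t %% m'.+1)%Z)).
rewrite /eqm /= modz_nat modn_mod -modz_nat gez0_abs ?modz_mod //.
by apply: modz_ge0.
Qed.

Lemma Cset_inv (m n k : nat) x w : (0 < m)%N -> invm m w ->
  forall f, @Cset m n k x w f <-> @Cset m n k x 1 f.
Proof.
move=> m0 [u hu] f; split.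
- case=> z ->; have [z' hz'] := ex_ord (w * (z : nat)%:Z) m0.
  by exists z'; apply: mu_eq; rewrite mul1r.
- case=> z ->; have [z' hz'] := ex_ord (u * (z : nat)%:Z) m0.
  exists z'; apply: mu_eq; rewrite mul1r.
  apply: (@eqm_trans _ _ (w * (u * (z : nat)%:Z))); last first.
    by apply: eqm_mul => //; apply: eqm_sym.
  rewrite mulrA -[X in eqm _ X _]mul1r; apply: eqm_mul => //.
Qed.

End Main.

Theorem theorem4p10 (m n k : nat) :
  (0 < m)%N -> (0 < n)%N -> (0 < k)%N ->
  coprime m (k - 1) -> is_ind m k n ->
  forall S : {set 'I_m}, base S ->
  forall x : 'I_m, Sstar S (x : nat)%:Z ->
  (basic S (x : nat)%:Z <-> complete n k S (x : nat)%:Z).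
Proof.
move=> m0 n0 k0 cop hind S _ x _; split.
- case=> r [[yy [hs hinv hr]] [s sS hsr]].
  have [w [ws wi e]] := sstar_inv m0 hs hinv.
  exists w; split; last exact: Cset_inv.
  have [z1 hz1] := ex_ord 1 m0.
  exists w, z1; split => //.
    exists s => //.
    apply: (@eqm_trans _ _ ((x : nat)%:Z * yy * w)).
      by rewrite -mulrA -[X in eqm _ X _]mulr1; apply: eqm_mul => //; apply: eqm_sym.
    by apply: eqm_mul => //; apply: eqm_sym; apply: eqm_trans hsr hr.
  by rewrite -[X in eqm _ X _]mulr1; apply: eqm_mul.
- move=> hc; have [y [[sst [z [hs [s sS hx] hy]]] [u hu]]] := complete_inv m0 n0 k0 cop hind hc.
  have si : invm m sst.
    exists ((z : nat)%:Z * u)%R; rewrite mulrA.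
    apply: eqm_trans hu; apply: eqm_mul => //; exact: eqm_sym.
  have [w [ws wi e]] := sstar_inv m0 hs si.
  exists ((s : nat)%:Z)%R; split; last by exists s.
  exists w; split => //.
  apply: eqm_sym; apply: (@eqm_trans _ _ ((s : nat)%:Z * sst * w)).
    by apply: eqm_mul.
  by rewrite -mulrA -[X in eqm _ _ X]mulr1; apply: eqm_mul.
Qed.
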